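(* Let $T_\sigma$ be a binary separating tree of a separable permutation $\sigma$ of size $k$ and $\tau$ a permutation of size $n$. The dynamic programming algorithm that computes, for all nodes $V$ of $T_\sigma$ (in postfix order) and all $1\le i\le j\le n$, $1\le a\le b\le n$, the entries $M(V,i,j,a,b)$ defined below, storing each entry as an explicit pattern and evaluating each $\mathrm{Longest}$ by exhaustive search over the indicated pairs $(h,c)$, and outputs $M(\text{root},1,n,1,n)$, runs in time $\mathcal{O}(\min(k,n)\,k\,n^6)$. The entries are: $M(V,i,j,a,b)=\epsilon$ if $i>j$ or $a>b$; for a leaf $V$, $M(V,i,j,a,b)=1$ if some $h\in\{i,\dots,j\}$ has $a\le\tau_h\le b$ and $\epsilon$ otherwise; for an internal node with children $V_L,V_R$, $M(V,i,j,a,b)=\mathrm{Longest}\{M(V_L,i,h-1,a,c-1)\oplus M(V_R,h,j,c,b)\}$ if $V$ is labeled $+$ and $\mathrm{Longest}\{M(V_L,i,h-1,c,b)\ominus M(V_R,h,j,a,c-1)\}$ if labeled $-$, both over $i\le h\le j+1$, $a\le c\le b+1$.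
   Context: A permutation is separable if it avoids the patterns $3\,1\,4\,2$ and $2\,4\,1\,3$ ($\pi$ is a pattern of $\sigma$ if some subsequence of $\sigma$ is order-isomorphic to $\pi$). A binary separating tree of $\sigma=\sigma_1\cdots\sigma_k$ is an ordered binary tree with $k$ leaves (read left to right as $\sigma_1,\dots,\sigma_k$), internal nodes labeled $+$ or $-$, such that the entries below each node have values forming an interval and, at a $+$ (resp. $-$) node, values below the left child are all smaller (resp. larger) than those below the right child; it has $\mathcal{O}(k)$ nodes. $\epsilon$ is the empty pattern. For patterns $\pi$ of length $k$ and $\pi'$ of length $k'$: $\pi\oplus\pi'=\pi_1\cdots\pi_k(\pi'_1+k)\cdots(\pi'_{k'}+k)$ and $\pi\ominus\pi'=(\pi_1+k')\cdots(\pi_k+k')\pi'_1\cdots\pi'_{k'}$. $\mathrm{Longest}(S)$ returns an element of maximal length of the set $S$ of patterns. *)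

(* Defs.v *)
From mathcomp Require Import all_boot.
Set Implicit Arguments. Unset Strict Implicit. Unset Printing Implicit Defensive.

(* Patterns / permutations are sequences of positive naturals (1-based values). *)

Definition is_perm (s : seq nat) (k : nat) : Prop := perm_eq s (iota 1 k).

Definition order_iso (s t : seq nat) : Prop :=
  size s = size t /\
  forall i j, i < size s -> j < size s ->
    (nth 0 s i < nth 0 s j) = (nth 0 t i < nth 0 t j).

Definition contains (s pi : seq nat) : Prop :=
  exists m : bitseq, size m = size s /\ order_iso (mask m s) pi.

Definition separable (s : seq nat) : Prop :=
  ~ contains s [:: 3; 1; 4; 2] /\ ~ contains s [:: 2; 4; 1; 3].

(* Binary trees with internal nodes labeled + (true) or - (false) *)
Inductive septree : Type :=
| Leaf : septree
| Node : bool -> septree -> septree -> septree.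

Fixpoint nleaves (T : septree) : nat :=
  match T with
  | Leaf => 1
  | Node _ L R => nleaves L + nleaves R
  end.

Definition is_interval (s : seq nat) : Prop :=
  uniq s /\ forall x y z, x \in s -> y \in s -> x <= z <= y -> z \in s.

Fixpoint sep_tree_of (T : septree) (s : seq nat) : Prop :=
  match T with
  | Leaf => size s = 1 /\ is_interval s
  | Node sg L R =>
      let s1 := take (nleaves L) s in
      let s2 := drop (nleaves L) s in
      size s = nleaves L + nleaves R /\ is_interval s /\
      sep_tree_of L s1 /\ sep_tree_of R s2 /\
      (forall x y, x \in s1 -> y \in s2 -> if sg then x < y else y < x)
  end.

Definition oplus (p q : seq nat) : seq nat := p ++ map (fun x => x + size p) q.
Definition ominus (p q : seq nat) : seq nat := map (fun x => x + size q) p ++ q.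

(* Longest S: an element of maximal length (first one met); epsilon if empty *)
Definition Longest (S : seq (seq nat)) : seq nat :=
  foldl (fun best p => if size best < size p then p else best) [::] S.

(* tau_h, 1-based *)
Definition tauh (tau : seq nat) (h : nat) : nat := nth 0 tau h.-1.

Definition pairs (i j a b : nat) : seq (nat * nat) :=
  [seq (h, c) | h <- iota i (j.+2 - i), c <- iota a (b.+2 - a)].

Fixpoint M (T : septree) (tau : seq nat) (i j a b : nat) : seq nat :=
  if (j < i) || (b < a) then [::] else
  match T with
  | Leaf => if has (fun h => a <= tauh tau h <= b) (iota i (j.+1 - i))
            then [:: 1] else [::]
  | Node sg L R =>
      if sg then
        Longest [seq oplus (M L tau i p.1.-1 a p.2.-1) (M R tau p.1 j p.2 b)
                | p <- pairs i j a b]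
      else
        Longest [seq ominus (M L tau i p.1.-1 p.2 b) (M R tau p.1 j a p.2.-1)
                | p <- pairs i j a b]
  end.

Definition dp_output (T : septree) (tau : seq nat) (n : nat) : seq nat :=
  M T tau 1 n 1 n.

(* Cost model (unit cost per elementary step, patterns stored explicitly):
   - an entry with i > j or a > b costs 1;
   - a leaf entry costs a scan over h in i..j, plus 1;
   - an internal entry costs, for each pair (h,c), the construction of the
     concatenated pattern (sizes of both child entries) plus 1 for the
     length comparison of Longest, plus the cost of storing the result. *)
Definition entry_cost (T : septree) (tau : seq nat) (i j a b : nat) : nat :=
  if (j < i) || (b < a) then 1 else
  match T with
  | Leaf => (j.+1 - i) + 1
  | Node sg L R =>
      \sum_(p <- pairs i j a b)
         ((if sg then size (M L tau i p.1.-1 a p.2.-1) + size (M R tau p.1 j p.2 b)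
           else size (M L tau i p.1.-1 p.2 b) + size (M R tau p.1 j a p.2.-1)) + 1)
      + size (M T tau i j a b) + 1
  end.

Definition node_cost (T : septree) (tau : seq nat) (n : nat) : nat :=
  \sum_(1 <= i < n.+1) \sum_(i <= j < n.+1)
    \sum_(1 <= a < n.+1) \sum_(a <= b < n.+1) entry_cost T tau i j a b.

Fixpoint total_cost (T : septree) (tau : seq nat) (n : nat) : nat :=
  match T with
  | Leaf => node_cost T tau n
  | Node _ L R => total_cost L tau n + total_cost R tau n + node_cost T tau n
  end.

(* Main.v *)
Require Import Defs.
From mathcomp Require Import all_boot.
From mathcomp Require Import zify.

Lemma Longest_size B S : all (fun p => size p <= B) S -> size (Longest S) <= B.
Proof.
rewrite /Longest.
suff H : forall best : seq nat, size best <= B -> all (fun p => size p <= B) S ->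
  size (foldl (fun best p => if size best < size p then p else best) best S) <= B.
  by apply: H.
elim: S => [|p S IH] best hb //= /andP[hp hS].
by apply: IH hS; case: ifP.
Qed.

Lemma mem_pairs i j a b h c : (h, c) \in pairs i j a b ->
  i <= h < i + (j.+2 - i) /\ a <= c < a + (b.+2 - a).
Proof.
rewrite /pairs => /allpairsP [[h' c'] [/= h1 h2 [-> ->]]].
by move: h1 h2; rewrite !mem_iota => -> ->.
Qed.

Arguments mem_pairs {i j a b h c}.

Lemma size_M T tau i j a b : 0 < i ->
  size (M T tau i j a b) <= minn (nleaves T) (j.+1 - i).
Proof.
elim: T i j a b => [|sg L IHL R IHR] i j a b hi /=; case: ifP => hij //=.
  case: ifP => _ //=; move/negbT: hij; lia.
have key : forall h c, (h, c) \in pairs i j a b ->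
  (size (M L tau i h.-1 a c.-1) <= minn (nleaves L) (h - i)) /\
  (size (M R tau h j c b) <= minn (nleaves R) (j.+1 - h)) /\
  (size (M L tau i h.-1 c b) <= minn (nleaves L) (h - i)) /\
  (size (M R tau h j a c.-1) <= minn (nleaves R) (j.+1 - h)).
  move=> h c /mem_pairs [H1 H2].
  have hh : 0 < h by lia.
  have e : h.-1.+1 = h by lia.
  have := IHL i h.-1 a c.-1 hi; have := IHR h j c b hh;
  have := IHL i h.-1 c b hi; have := IHR h j a c.-1 hh.
  rewrite e; lia.
case: sg; apply: Longest_size; apply/allP => x /mapP [[h c] hp ->] /=;
  have := key h c hp; have := mem_pairs hp; rewrite /oplus /ominus size_cat size_map;
  move/negbT: hij; lia.
Qed.

Lemma sum_le (T : eqType) (s : seq T) (F : T -> nat) N B :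
  size s <= N -> (forall x, x \in s -> F x <= B) -> \sum_(x <- s) F x <= N * B.
Proof.
move=> hs hF; apply: (@leq_trans (size s * B)); last by apply: leq_mul.
elim: s hs hF => [|x s IH] hs hF; first by rewrite big_nil.
rewrite big_cons /= mulSn leq_add //; first by apply: hF; rewrite inE eqxx.
apply: IH => [|y hy]; first by apply: ltnW.
by apply: hF; rewrite inE hy orbT.
Qed.

Lemma entry_le T tau n k i j a b : 0 < n -> 0 < nleaves T -> nleaves T <= k ->
  1 <= i <= j -> j <= n -> 1 <= a <= b -> b <= n ->
  entry_cost T tau i j a b <= 10 * minn k n * n ^ 2.
Proof.
move=> hn hT hk hij hj hab hb.
have hm : 0 < minn k n by lia.
rewrite /entry_cost; case: ifP => hc; first by nia.
case: T hT hk hc => [|sg L R] hT hk hc; first by nia.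
have hs := @size_M (Node sg L R) tau i j a b (ltac:(lia)).
set m := minn k n in hm *.
have hsum : \sum_(p <- pairs i j a b)
     ((if sg then size (M L tau i p.1.-1 a p.2.-1) + size (M R tau p.1 j p.2 b)
       else size (M L tau i p.1.-1 p.2 b) + size (M R tau p.1 j a p.2.-1)) + 1)
     <= (n.+1 * n.+1) * m.+1.
  apply: sum_le.
    rewrite /pairs size_allpairs !size_iota; apply: leq_mul; lia.
  move=> [h c] hp /=.
  have [H1 H2] := mem_pairs hp.
  have hh : 0 < h by lia.
  have e : h.-1.+1 = h by lia.
  have := @size_M L tau i h.-1 a c.-1 (ltac:(lia)); have := @size_M R tau h j c b hh;
  have := @size_M L tau i h.-1 c b (ltac:(lia)); have := @size_M R tau h j a c.-1 hh.
  rewrite e /= in hT hk *; case: sg {hs hc} => /=; rewrite /m; lia.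
move: hs; rewrite /= -/m => hs.
have hs' : size (M (Node sg L R) tau i j a b) <= m by move: hs hk hj hij; rewrite /m /=; lia.
apply: (leq_trans (leq_add (leq_add hsum hs') (leqnn 1))).
nia.
Qed.

Lemma node_le T tau n k : 0 < n -> 0 < nleaves T -> nleaves T <= k ->
  node_cost T tau n <= 10 * minn k n * n ^ 6.
Proof.
move=> hn hT hk; rewrite /node_cost.
set E := 10 * minn k n * n ^ 2.
apply: (@leq_trans (n * (n * (n * (n * E))))); last first.
  rewrite /E !expnS expn0; lia.
apply: sum_le; first by rewrite size_iota; lia.
move=> i; rewrite mem_index_iota => hi.
apply: sum_le; first by rewrite size_iota; lia.
move=> j; rewrite mem_index_iota => hj.
apply: sum_le; first by rewrite size_iota; lia.
move=> a; rewrite mem_index_iota => ha.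
apply: sum_le; first by rewrite size_iota; lia.
move=> b; rewrite mem_index_iota => hb.
apply: entry_le => //; lia.
Qed.

Lemma nleaves_gt0 T : 0 < nleaves T.
Proof. elim: T => //= _ L IHL R IHR; lia. Qed.

Lemma total_le T tau n k : 0 < n -> nleaves T <= k ->
  total_cost T tau n <= (2 * nleaves T).-1 * (10 * minn k n * n ^ 6).
Proof.
move=> hn; elim: T => [|sg L IHL R IHR] hk /=.
  by have := @node_le Leaf tau n k hn isT hk; lia.
have hL := nleaves_gt0 L; have hR := nleaves_gt0 R.
have := IHL ltac:(simpl in hk; lia); have := IHR ltac:(simpl in hk; lia).
have := @node_le (Node sg L R) tau n k hn (nleaves_gt0 _) hk.
set X := 10 * minn k n * n ^ 6.
move=> h1 h2 h3.
have e : (2 * (nleaves L + nleaves R)).-1 = (2 * nleaves L).-1 + (2 * nleaves R).-1 + 1 by lia.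
rewrite e !mulnDl mul1n; apply: leq_add => //; apply: leq_add => //.
Qed.

Theorem proposition4 :
  exists C : nat, forall (k n : nat) (sigma tau : seq nat) (T : septree),
    is_perm sigma k -> separable sigma -> sep_tree_of T sigma ->
    is_perm tau n ->
    total_cost T tau n <= C * minn k n * k * n ^ 6.
Proof.
exists 20 => k n sigma tau T hp _ hT _.
have hs : size sigma = nleaves T by case: T hT => [|sg L R] /= [].
have hk : nleaves T = k by rewrite -hs (perm_size hp) size_iota.
case: n => [|n].
  have z : forall T', node_cost T' tau 0 = 0 by move=> T'; rewrite /node_cost big_geq.
  have z2 : forall T', total_cost T' tau 0 = 0.
    by elim=> [|? L IHL R IHR] /=; rewrite z ?IHL ?IHR.
  by rewrite z2.
apply: (leq_trans (@total_le T tau n.+1 k (ltn0Sn n) (eq_leq hk))).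
rewrite hk; have := nleaves_gt0 T; rewrite hk => hk0.
set X := 10 * minn k n.+1 * n.+1 ^ 6.
have -> : 20 * minn k n.+1 * k * n.+1 ^ 6 = (2 * k) * X by rewrite /X; lia.
apply: leq_mul => //; lia.
Qed.
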